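(* Define $\tau_{k} = \{T \mid T \subseteq \Omega, |T| = k \in \mathbb{N}\}$ and let $\mathcal{B}_m$ denote any set of binary strings (information resources) of length $m$ or less. Define $q := \mathbb{E}_{T, F}\left[\phi(T,F)\right] = \mathbb{E}_{T,F}[P_\phi(\omega \in T \mid F)] = \Pr(\omega \in T; \mathcal{A})$, the expected decomposable probability of success under the joint distribution on $T \in \tau_{k}$ and $F \in \mathcal{B}_m$ for any fixed algorithm $\mathcal{A}$. Then \[ q \leq \frac{I(T; F) + D(P_T \| \mathcal{U}_T) + 1}{I_{\Omega}}, \] where $I_{\Omega} = -\log k/|\Omega|$, $D(P_T \| \mathcal{U}_T)$ is the Kullback-Leibler divergence between the marginal distribution on $T$ and the uniform distribution on $T$, and $I(T; F)$ is the mutual information. Alternatively, \[ \Pr(\omega \in T; \mathcal{A}) \leq \frac{H(\mathcal{U}_T) - H(T \mid F) + 1}{I_{\Omega}}, \] where $H(\mathcal{U}_T) = \log\binom{|\Omega|}{k}$.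
   Context: Algorithmic search framework: finite discrete search space $\Omega$, random target set $T\subseteq\Omega$ with indicator vector $\mathbf{t}$, random information resource $F$, and a fixed search algorithm $\mathcal{A}$ whose sampled element $\omega$ (or $X$) depends on $T$ only through $F$. A probability-of-success metric $\phi$ is decomposable if there exists a probability vector $\mathbf{P}_{\phi,f}$ over $\Omega$, not a function of the target, with $\phi(t,f)=\mathbf{t}^{\top}\mathbf{P}_{\phi,f}=P_\phi(X\in t\mid f)$. *)

(* Defs.v *)
From HB Require Import structures.
From mathcomp Require Import all_boot all_order all_algebra.
From mathcomp Require Import reals exp.
Set Implicit Arguments. Unset Strict Implicit. Unset Printing Implicit Defensive.
Import Order.TTheory GRing.Theory Num.Theory.
Local Open Scope ring_scope.

(* binary strings of length at most m (possible values of an information resource) *)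
Definition bitstr (m : nat) := {i : 'I_m.+1 & (nat_of_ord i).-tuple bool}.

Section Info.
Variable R : realType.

Definition log2 (x : R) : R := ln x / ln 2.

Definition xlog (a b : R) : R := if a == 0 then 0 else a * log2 (a / b).

Variables (Omega : finType) (m : nat).
(* joint distribution of (T, F) *)
Variable P : {set Omega} -> bitstr m -> R.

Definition margT (t : {set Omega}) : R := \sum_(f : bitstr m) P t f.
Definition margF (f : bitstr m) : R := \sum_(t : {set Omega}) P t f.

Definition mutinfo : R :=
  \sum_(t : {set Omega}) \sum_(f : bitstr m) xlog (P t f) (margT t * margF f).

Definition condentropy : R :=
  - \sum_(t : {set Omega}) \sum_(f : bitstr m) xlog (P t f) (margF f).

Definition kl_uniform (k : nat) : R :=
  \sum_(t : {set Omega} | #|t| == k) xlog (margT t) (1 / ('C(#|Omega|, k))%:R).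

Definition H_uniform (k : nat) : R := log2 ('C(#|Omega|, k))%:R.

Definition I_Omega (k : nat) : R := - log2 (k%:R / (#|Omega|)%:R).

(* expected decomposable probability of success:
   q = E_{T,F}[ t^T P_{phi,F} ] = sum_{t,f} P(t,f) sum_{w in t} Pf f w *)
Definition q_success (Pf : bitstr m -> Omega -> R) : R :=
  \sum_(t : {set Omega}) \sum_(f : bitstr m) P t f * \sum_(w in t) Pf f w.
End Info.

(* Main.v *)
Require Import Defs.
From HB Require Import structures.
From mathcomp Require Import all_boot all_order all_algebra.
From mathcomp Require Import reals exp interval_inference convex.
From mathcomp Require Import ring lra.
Import Order.TTheory GRing.Theory Num.Theory.
Local Open Scope ring_scope.

Lemma ln_lin (R : realType) (a p : R) : 1 < a -> 0 <= p -> p <= 1 ->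
  p * ln a <= ln (1 + a * p).
Proof.
move=> a1 p0 p1.
have := @concave_ln R (Itv01 p0 p1) (1 + a) 1 ltac:(lra) ltac:(lra).
rewrite !convRE /= ln1 mulr0 addr0 /unstable.onem.
have -> : p * (1 + a) + (1 - p) * 1 = 1 + a * p by ring.
move=> h; apply: le_trans h.
rewrite ler_wpM2l // ler_ln ?posrE; lra.
Qed.

Lemma card_contain (T : finType) (k : nat) (w : T) :
  #|[set t : {set T} | (#|t| == k.+1) && (w \in t)]| = 'C(#|T|.-1, k).
Proof.
rewrite -(cardsC1 w) -cards_draws.
have -> : [set t : {set T} | (#|t| == k.+1) && (w \in t)] =
  (fun B => w |: B) @: [set B : {set T} | B \subset [set~ w] & #|B| == k].
  apply/setP => t; rewrite inE; apply/andP/imsetP.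
    move=> [/eqP ht wt]; exists (t :\ w); last by rewrite setD1K.
    rewrite inE; apply/andP; split.
      by apply/subsetP => x; rewrite !inE => /andP[].
    by move: ht; rewrite (cardsD1 w t) wt add1n => -[->].
  move=> [B]; rewrite inE => /andP[sB /eqP cB] ->; split; last by rewrite setU11.
  rewrite cardsU1 cB.
  have -> : w \notin B by apply/negP => /(subsetP sB); rewrite !inE eqxx.
  by [].
apply: card_in_imset => B1 B2; rewrite !inE => /andP[s1 _] /andP[s2 _] e.
have n1 : w \notin B1 by apply/negP => /(subsetP s1); rewrite !inE eqxx.
have n2 : w \notin B2 by apply/negP => /(subsetP s2); rewrite !inE eqxx.
by rewrite -(setU1K n1) -(setU1K n2) e.
Qed.

Lemma sum_pi (R : realType) (T : finType) (k : nat) (pi : T -> R) :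
  \sum_(t : {set T} | #|t| == k.+1) \sum_(w in t) pi w =
  'C(#|T|.-1, k)%:R * \sum_w pi w.
Proof.
under eq_bigr do rewrite big_mkcond /=.
rewrite exchange_big /= mulr_sumr; apply: eq_bigr => w _.
rewrite -big_mkcondr /= sumr_const -(@card_contain T k w) mulr_natl.
congr (_ *+ _); apply: eq_card => t; by rewrite inE.
Qed.

Lemma sum_one (R : realType) (T : finType) (k : nat) :
  \sum_(t : {set T} | #|t| == k) (1 : R) = 'C(#|T|, k)%:R.
Proof.
rewrite sumr_const -card_draws; congr (_ *+ _); apply: eq_card => t; by rewrite inE.
Qed.

Lemma le_term (R : realType) (I : finType) (F : I -> R) i :
  (forall j, 0 <= F j) -> F i <= \sum_j F j.
Proof.
move=> h; rewrite (bigD1 i) //= lerDl sumr_ge0 //.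
Qed.

Lemma xlogE (R : realType) (a b : R) : xlog a b = a * log2 (a / b).
Proof. by rewrite /xlog; case: eqP => [->|]; rewrite ?mul0r. Qed.

Lemma identity (R : realType) (Omega : finType) (k m : nat)
  (P : {set Omega} -> bitstr m -> R) :
  (forall t f, 0 <= P t f) ->
  \sum_(t : {set Omega}) \sum_(f : bitstr m) P t f = 1 ->
  (forall t f, P t f != 0 -> #|t| = k) ->
  mutinfo P + kl_uniform P k = H_uniform R Omega k - condentropy P.
Proof.
move=> P0 P1 Psupp.
have PT0 t : 0 <= margT P t by apply: sumr_ge0.
have PTk (t : {set Omega}) : #|t| != k -> margT P t = 0.
  move=> tk; apply: big1 => f _; apply/eqP; apply: contraR tk => /Psupp ->.
  by rewrite eqxx.
pose g (t : {set Omega}) := margT P t * log2 (margT P t).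
have M : mutinfo P = - condentropy P - \sum_t g t.
  rewrite /condentropy opprK /mutinfo -sumrB; apply: eq_bigr => t _.
  rewrite /g /margT mulr_suml -sumrB; apply: eq_bigr => f _.
  rewrite !xlogE.
  have [->|Pn0] := eqVneq (P t f) 0; first by rewrite !mul0r subrr.
  have Pp : 0 < P t f by rewrite lt_neqAle eq_sym Pn0 P0.
  have Tp : 0 < margT P t by apply: lt_le_trans Pp _; exact: (@le_term R _ (fun f => P t f)).
  have Fp : 0 < margF P f by apply: lt_le_trans Pp _; exact: (@le_term R _ (fun t => P t f)).
  rewrite -mulrBr /log2 -mulrBl /margT.
  rewrite ln_div ?posrE ?mulr_gt0 // lnM ?posrE // ln_div ?posrE //.
  congr (_ * (_ / _)); ring.
have KL : kl_uniform P k = \sum_t g t + H_uniform R Omega k.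
  rewrite /kl_uniform /H_uniform.
  have -> : \sum_(t : {set Omega} | #|t| == k) xlog (margT P t) (1 / ('C(#|Omega|, k))%:R)
      = \sum_t (g t + margT P t * log2 ('C(#|Omega|, k))%:R).
    rewrite big_mkcond; apply: eq_bigr => t _ /=.
    case: eqP => tk; last first.
      by rewrite /g PTk ?mul0r ?addr0 //; apply/eqP.
    rewrite xlogE /g.
    have [->|Tn0] := eqVneq (margT P t) 0; first by rewrite !mul0r addr0.
    have Tp : 0 < margT P t by rewrite lt_neqAle eq_sym Tn0 PT0.
    have Kp : (0 : R) < ('C(#|Omega|, k))%:R.
      rewrite ltr0n bin_gt0 -tk; exact: max_card.
    rewrite -mulrDr /log2 -mulrDl -lnM ?posrE //.
    by rewrite div1r invrK.
  rewrite big_split /= -mulr_suml.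
  by rewrite [\sum_t margT P t]P1 mul1r.
rewrite M KL; ring.
Qed.

Lemma main_ln (R : realType) (Omega : finType) (k m : nat)
  (P : {set Omega} -> bitstr m -> R)
  (Pf : bitstr m -> Omega -> R) :
  (0 < k)%N -> (k < #|Omega|)%N ->
  (forall t f, 0 <= P t f) ->
  \sum_(t : {set Omega}) \sum_(f : bitstr m) P t f = 1 ->
  (forall t f, P t f != 0 -> #|t| = k) ->
  (forall f w, 0 <= Pf f w) ->
  (forall f, \sum_(w : Omega) Pf f w = 1) ->
  q_success P Pf * ln ((#|Omega|)%:R / k%:R : R)
  <= ln ('C(#|Omega|, k))%:R + ln 2 +
     \sum_t \sum_f P t f * ln (P t f / margF P f).
Proof.
move=> k0 kN P0 P1 Psupp Pf0 Pf1.
set N := #|Omega|; set K : R := ('C(N, k))%:R; set a : R := N%:R / k%:R.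
set G := \sum_t \sum_f _.
pose pi f (t : {set Omega}) := \sum_(w in t) Pf f w.
have pi0 f t : 0 <= pi f t by apply: sumr_ge0.
have pi1 f t : pi f t <= 1.
  rewrite -(Pf1 f) [X in _ <= X](bigID (mem t)) /= lerDl sumr_ge0 //.
have kR : (0 : R) < k%:R by rewrite ltr0n.
have a1 : 1 < a by rewrite /a ltr_pdivlMr // mul1r ltr_nat.
have K0 : 0 < K by rewrite ltr0n bin_gt0 ltnW.
pose r f t := (1 + a * pi f t) / (2 * K).
have r0 f t : 0 < r f t.
  rewrite /r divr_gt0 //; last by rewrite mulr_gt0.
  by rewrite ltr_pwDl // mulr_ge0 // ltW // (lt_trans ltr01).
have sumr (f : bitstr m) : \sum_(t : {set Omega} | #|t| == k) r f t = 1.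
  rewrite -mulr_suml big_split /= sum_one -mulr_sumr.
  have ek : k = k.-1.+1 by rewrite prednK.
  rewrite [in X in _ + X]ek sum_pi Pf1 mulr1.
  have aC : a * 'C(N.-1, k.-1)%:R = K.
    rewrite /a mulrAC -natrM mul_bin_diag -ek natrM mulrAC divff ?mul1r //.
    by rewrite gt_eqF.
  rewrite aC -/K; field; lra.
have PF0 (f : bitstr m) : 0 <= margF P f by apply: sumr_ge0.
have PF1 : \sum_f margF P f = 1 by rewrite /margF exchange_big.
have gibbs (t : {set Omega}) (f : bitstr m) : P t f * ln (r f t) <=
    P t f * ln (P t f / margF P f) + (if #|t| == k then margF P f * r f t else 0) - P t f.
  have [->|Pn0] := eqVneq (P t f) 0.
    rewrite !mul0r add0r subr0; case: ifP => // _; rewrite mulr_ge0 // ltW //.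
  have Pp : 0 < P t f by rewrite lt_neqAle eq_sym Pn0 P0.
  have Fp : 0 < margF P f.
    by apply: lt_le_trans Pp _; exact: (@le_term R _ (fun t => P t f)).
  rewrite (Psupp _ _ Pn0) eqxx.
  have := @le_ln1Dx R (margF P f * r f t / P t f - 1).
  rewrite subrKC.
  have hh : -1 < margF P f * r f t / P t f - 1.
    have : 0 < margF P f * r f t / P t f by rewrite divr_gt0 // mulr_gt0.
    lra.
  move=> /(_ hh).
  have Xp : 0 < margF P f * r f t by rewrite mulr_gt0.
  rewrite (@ln_div R (margF P f * r f t) (P t f)) ?posrE //.
  rewrite (@lnM R (margF P f) (r f t)) ?posrE // => h.
  rewrite (@ln_div R (P t f) (margF P f)) ?posrE //.
  have := ler_wpM2l (ltW Pp) h.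
  have -> : P t f * (margF P f * r f t / P t f - 1) = margF P f * r f t - P t f.
    by rewrite mulrBr mulr1 [P t f * (_ / _)]mulrC mulfVK // gt_eqF.
  rewrite !mulrDr !mulrN; lra.
have S1 : \sum_t \sum_f P t f * ln (r f t) <= G.
  apply: le_trans (_ : _ <= \sum_(t : {set Omega}) \sum_(f : bitstr m) (P t f * ln (P t f / margF P f) +
     (if #|t| == k then margF P f * r f t else 0) - P t f)) _.
    apply: ler_sum => t _; apply: ler_sum => f _; exact: gibbs.
  under eq_bigr do rewrite big_split /= big_split /= sumrN.
  rewrite big_split big_split /= sumrN P1 -/G.
  have -> : \sum_(t : {set Omega}) \sum_(f : bitstr m) (if #|t| == k then margF P f * r f t else 0) = 1.
    rewrite exchange_big /=.
    under eq_bigr do rewrite -big_mkcond /= -mulr_sumr sumr mulr1.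
    exact: PF1.
  lra.
have L2 : 0 < ln (2 : R) by rewrite ln_gt0 //; lra.
have lb (t : {set Omega}) (f : bitstr m) :
    P t f * (pi f t * ln a - (ln 2 + ln K)) <= P t f * ln (r f t).
  rewrite ler_wpM2l // /r ln_div ?posrE ?mulr_gt0 //; last first.
    by rewrite ltr_pwDl // mulr_ge0 // ltW // (lt_trans ltr01).
  rewrite lnM ?posrE //.
  have := @ln_lin R a (pi f t) a1 (pi0 f t) (pi1 f t); lra.
have S2 : \sum_(t : {set Omega}) \sum_(f : bitstr m) P t f * (pi f t * ln a - (ln 2 + ln K)) =
    q_success P Pf * ln a - (ln 2 + ln K).
  under eq_bigr do under eq_bigr do rewrite mulrBr.
  under eq_bigr do rewrite sumrB.
  rewrite sumrB /q_success; congr (_ - _).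
    rewrite mulr_suml; apply: eq_bigr => t _; rewrite mulr_suml.
    by apply: eq_bigr => f _; rewrite mulrA.
  rewrite -[RHS]mul1r -P1 mulr_suml; apply: eq_bigr => t _; by rewrite mulr_suml.
have S3 : \sum_(t : {set Omega}) \sum_(f : bitstr m) P t f * (pi f t * ln a - (ln 2 + ln K))
    <= \sum_t \sum_f P t f * ln (r f t).
  by apply: ler_sum => t _; apply: ler_sum => f _; exact: lb.
have := le_trans S3 S1.
rewrite S2; lra.
Qed.

Lemma alg_id (R : realType) (x y z u : R) : y != 0 -> u != 0 ->
  (x / y - - (z / y) + 1) / (u / y) = (x + y + z) / u.
Proof. by move=> y0 u0; field; rewrite y0 u0. Qed.

Theorem theorem5 (R : realType) (Omega : finType) (k m : nat)
  (Bm : {set bitstr m})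
  (P : {set Omega} -> bitstr m -> R)
  (Pf : bitstr m -> Omega -> R) :
  (0 < k)%N -> (k < #|Omega|)%N ->
  (* P is a joint distribution on tau_k x B_m *)
  (forall t f, 0 <= P t f) ->
  \sum_(t : {set Omega}) \sum_(f : bitstr m) P t f = 1 ->
  (forall t f, P t f != 0 -> #|t| = k /\ f \in Bm) ->
  (* the algorithm: for each resource f, a probability vector P_{phi,f} on Omega *)
  (forall f w, 0 <= Pf f w) ->
  (forall f, \sum_(w : Omega) Pf f w = 1) ->
  q_success P Pf
    <= (mutinfo P + kl_uniform P k + 1) / I_Omega R Omega k
  /\ q_success P Pf
    <= (H_uniform R Omega k - condentropy P + 1) / I_Omega R Omega k.
Proof.
move=> k0 kN P0 P1 Psupp Pf0 Pf1.
have Psupp' (t : {set Omega}) (f : bitstr m) : P t f != 0 -> #|t| = k.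
  by move=> /Psupp [].
have H := @main_ln R Omega k m P Pf k0 kN P0 P1 Psupp' Pf0 Pf1.
rewrite identity //.
set G := \sum_t \sum_f _ in H.
set K : R := ('C(#|Omega|, k))%:R in H.
set a : R := (#|Omega|%:R / k%:R) in H.
have C : condentropy P = - (G / ln 2).
  rewrite /condentropy /G; congr (- _); rewrite mulr_suml; apply: eq_bigr => t _.
  rewrite mulr_suml; apply: eq_bigr => f _; by rewrite xlogE /log2 mulrA.
have HU : H_uniform R Omega k = ln K / ln 2 by [].
have kR : (0 : R) < k%:R by rewrite ltr0n.
have a1 : 1 < a by rewrite /a ltr_pdivlMr // mul1r ltr_nat.
have IO : I_Omega R Omega k = ln a / ln 2.
  rewrite /I_Omega /log2.
  have -> : (k%:R / #|Omega|%:R : R) = a^-1 by rewrite /a invf_div.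
  rewrite lnV ?posrE; last exact: lt_trans ltr01 a1.
  by rewrite mulNr opprK.
have La : 0 < ln a by rewrite ln_gt0.
have L2 : 0 < ln (2 : R) by rewrite ln_gt0 // ltr1n.
have E : (ln K / ln 2 - - (G / ln 2) + 1) / (ln a / ln 2) = (ln K + ln 2 + G) / ln a.
  by apply: alg_id; rewrite gt_eqF.
suff : q_success P Pf <= (ln K / ln 2 - - (G / ln 2) + 1) / (ln a / ln 2).
  by rewrite C HU IO.
by rewrite E ler_pdivlMr.
Qed.
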